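(* Let $\beta\in(0,1)$. There exists $C_\beta>0$ such that for every $N\in\mathbb{N}$, every minimizer $h\in\{1,\dots,N\}$ of $\mathcal{H}_{\beta,N}$ and every minimizer $l\in\{1,\dots,N\}$ of $\mathcal{L}_{\beta,N}$ satisfy $$|h-h_*|\le C_\beta N^{1/4},\qquad |l-l_*|\le C_\beta N^{1/4},$$ where $h_*=(1-\beta)^{1/2}N^{1/2}$ and $l_*=(1-\beta)^{-1/2}N^{1/2}$. Moreover, if $\beta\notin\mathbb{Q}$, the minimizers of $\mathcal{H}_{\beta,N}$ and of $\mathcal{L}_{\beta,N}$ are unique.
   Context: For $N\in\mathbb{N}$ and $\beta\in(0,1)$ define $\mathcal{H}_{\beta,N},\mathcal{L}_{\beta,N}:\{1,\dots,N\}\to\mathbb{R}$ by $\mathcal{H}_{\beta,N}(h)=2h+2(1-\beta)\lceil N/h\rceil$ and $\mathcal{L}_{\beta,N}(l)=2\lceil N/l\rceil+2(1-\beta)l$. *)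

(* Defs.v *)
From mathcomp Require Import all_boot all_order all_algebra.
From mathcomp Require Import reals.
Set Implicit Arguments. Unset Strict Implicit. Unset Printing Implicit Defensive.
Import Order.TTheory GRing.Theory Num.Theory.
Local Open Scope ring_scope.

Definition Hfun (R : realType) (beta : R) (N h : nat) : R :=
  2 * h%:R + 2 * (1 - beta) * (Num.ceil (N%:R / h%:R : R))%:~R.

Definition Lfun (R : realType) (beta : R) (N l : nat) : R :=
  2 * (Num.ceil (N%:R / l%:R : R))%:~R + 2 * (1 - beta) * l%:R.

Definition is_minimizer (R : realType) (f : nat -> R) (N h : nat) : Prop :=
  (1 <= h <= N)%N /\ forall h' : nat, (1 <= h' <= N)%N -> f h <= f h'.

(* Main.v *)
Require Import Defs.
From mathcomp Require Import all_boot all_order all_algebra.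
From mathcomp Require Import reals ring lra classical_sets.
Import Order.TTheory GRing.Theory Num.Theory.
Local Open Scope ring_scope.

Lemma alg1 (R : realType) (c N h h0 x q q0 : R) : 0 < c -> 1 <= h -> 1 <= h0 ->
  x ^+ 2 = c * N ->
  h + c * q <= h0 + c * q0 -> N <= q * h -> q0 * h0 <= N + h0 ->
  (h0 - x) ^+ 2 <= (1 + c) * h0 ->
  (h - x) ^+ 2 <= (1 + 2 * c) * h.
Proof.
move=> c0 h1 h01 xE A B C D.
have E : h0 + c * q0 <= 2 * x + 1 + 2 * c.
  have : h0 * (h0 + c * q0) <= h0 * (2 * x + 1 + 2 * c).
    have C' : c * (q0 * h0) <= c * (N + h0) by rewrite ler_pM2l.
    nra.
  by rewrite ler_pM2l //; lra.
have B' : c * N <= c * (q * h) by rewrite ler_pM2l.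
have : h * (h + c * q) <= h * (2 * x + 1 + 2 * c) by rewrite ler_pM2l; lra.
nra.
Qed.
Lemma cand (R : realType) (c x : R) (N : nat) : 0 < c -> (1 <= N)%N -> 0 <= x ->
  x ^+ 2 = c * N%:R ->
  exists h0 : nat, (1 <= h0 <= N)%N /\ (h0%:R - x) ^+ 2 <= (1 + c) * h0%:R.
Proof.
move=> c0 N1 x0 xE.
have [/andP [t1 t2]] := truncn_itv x0.
case: (ltnP (Num.truncn x) N) => hN.
- exists (Num.truncn x).+1; split; first by rewrite ltnS leq0n hN.
  have h1 : 1 <= (Num.truncn x).+1%:R :> R by rewrite ler1n.
  have : 0 <= (Num.truncn x).+1%:R - x <= 1.
    rewrite -natr1 in t2 *; apply/andP; split; lra.
  move=> /andP[a b]. nra.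
- exists N; split; first by rewrite N1 leqnn.
  have : N%:R <= x by apply: le_trans t1; rewrite ler_nat.
  have N1' : 1 <= N%:R :> R by rewrite ler1n.
  move=> Nx. have : (N%:R - x)^+2 <= x^+2 by nra.
  rewrite xE; nra.
Qed.

Definition Fc {R : realType} (c : R) (N h : nat) : R :=
  h%:R + c * (Num.ceil (N%:R / h%:R : R))%:~R.

Lemma ceil_facts (R : realType) (N h : nat) : (1 <= h)%N ->
  let q := (Num.ceil (N%:R / h%:R : R))%:~R : R in
  N%:R <= q * h%:R /\ q * h%:R <= N%:R + h%:R.
Proof.
move=> h1 q.
have hp : 0 < h%:R :> R by rewrite ltr0n.
have [a b] := andP (ceil_itv (N%:R / h%:R : R)).
rewrite intrB /= in a.
split.
- by rewrite -ler_pdivrMr.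
- rewrite -ler_pdivlMr // mulrDl divff ?gt_eqF //; fold q in a; lra.
Qed.

Lemma core (R : realType) (c : R) (N h : nat) : 0 < c -> (1 <= h <= N)%N ->
  (forall h', (1 <= h' <= N)%N -> Fc (R:=R) c N h <= Fc (R:=R) c N h') ->
  (h%:R - Num.sqrt c * Num.sqrt N%:R) ^+ 2 <=
    (1 + 2 * c) * (2 * Num.sqrt c + 1 + 2 * c) * Num.sqrt N%:R.
Proof.
move=> c0 /andP[h1 hN] hmin.
have N1 : (1 <= N)%N by apply: leq_trans hN.
set x := Num.sqrt c * Num.sqrt N%:R.
have sc0 : 0 <= Num.sqrt c by apply: sqrtr_ge0.
have s1 : 1 <= Num.sqrt N%:R :> R by rewrite -{1}sqrtr1; apply: ler_wsqrtr; rewrite ler1n.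
have x0 : 0 <= x by rewrite /x mulr_ge0 // sqrtr_ge0.
have xE : x ^+ 2 = c * N%:R.
  by rewrite /x exprMn !sqr_sqrtr // ?ltW.
have [h0 [/andP[h01 h0N] D]] := @cand R _ _ _ c0 N1 x0 xE.
have := hmin h0 (introT andP (conj h01 h0N)); rewrite /Fc => A.
have [B _] := @ceil_facts R N h h1.
have [_ C] := @ceil_facts R N h0 h01.
have hr1 : 1 <= h%:R :> R by rewrite ler1n.
have h0r1 : 1 <= h0%:R :> R by rewrite ler1n.
have K := @alg1 R _ _ _ _ _ _ _ c0 hr1 h0r1 xE A B C D.
have hb : h%:R <= 2 * x + (1 + 2 * c).
  have : h%:R * h%:R <= h%:R * (2 * x + (1 + 2 * c)) by nra.
  by rewrite ler_pM2l //; lra.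
have xs : x <= Num.sqrt c * Num.sqrt N%:R by [].
apply: (le_trans K).
have k0 : 0 <= 1 + 2 * c by lra.
rewrite -mulrA ler_pM2l; last lra.
apply: (le_trans hb).
rewrite /x; nra.
Qed.

Lemma absb (R : realType) (d M s : R) : 0 <= M -> 0 <= s -> d ^+ 2 <= M * s ->
  `|d| <= Num.sqrt M * Num.sqrt s.
Proof.
move=> M0 s0 H; rewrite -sqrtr_sqr -sqrtrM //; exact: ler_wsqrtr.
Qed.

Lemma boundF (R : realType) (c : R) (N h : nat) : 0 < c -> (1 <= h <= N)%N ->
  (forall h', (1 <= h' <= N)%N -> Fc (R:=R) c N h <= Fc (R:=R) c N h') ->
  `|h%:R - Num.sqrt c * Num.sqrt N%:R| <=
    Num.sqrt ((1 + 2 * c) * (2 * Num.sqrt c + 1 + 2 * c)) * Num.sqrt (Num.sqrt N%:R).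
Proof.
move=> c0 hr hm; apply: absb; last exact: core.
  have := sqrtr_ge0 c => ?; rewrite mulr_ge0 //; lra.
exact: sqrtr_ge0.
Qed.

Lemma HfunE (R : realType) (beta : R) N h : Hfun beta N h = 2 * Fc (1 - beta) N h.
Proof. rewrite /Hfun /Fc; ring. Qed.

Lemma LfunE (R : realType) (beta : R) N h : beta < 1 ->
  Lfun beta N h = 2 * (1 - beta) * Fc (1 - beta)^-1 N h.
Proof.
move=> b1; rewrite /Lfun /Fc; field; rewrite subr_eq0; apply/eqP => E.
by move: b1; rewrite -E ltxx.
Qed.

Theorem lemma4p3 (R : realType) (beta : R) (hb0 : 0 < beta) (hb1 : beta < 1) :
  (exists C : R, 0 < C /\
     forall N : nat,
       (forall h : nat, is_minimizer (Hfun beta N) N h ->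
          `|h%:R - Num.sqrt (1 - beta) * Num.sqrt N%:R| <= C * Num.sqrt (Num.sqrt N%:R)) /\
       (forall l : nat, is_minimizer (Lfun beta N) N l ->
          `|l%:R - (Num.sqrt (1 - beta))^-1 * Num.sqrt N%:R| <= C * Num.sqrt (Num.sqrt N%:R)))
  /\
  (@irrational R beta ->
     forall N : nat,
       (forall h1 h2 : nat, is_minimizer (Hfun beta N) N h1 ->
          is_minimizer (Hfun beta N) N h2 -> h1 = h2) /\
       (forall l1 l2 : nat, is_minimizer (Lfun beta N) N l1 ->
          is_minimizer (Lfun beta N) N l2 -> l1 = l2)).
Proof.
set a := 1 - beta.
have a0 : 0 < a by rewrite /a subr_gt0.
have ai0 : 0 < a^-1 by rewrite invr_gt0.
set C1 := Num.sqrt ((1 + 2 * a) * (2 * Num.sqrt a + 1 + 2 * a)).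
set C2 := Num.sqrt ((1 + 2 * a^-1) * (2 * Num.sqrt a^-1 + 1 + 2 * a^-1)).
have C10 : 0 <= C1 by apply: sqrtr_ge0.
have C20 : 0 <= C2 by apply: sqrtr_ge0.
split.
  exists (C1 + C2 + 1); split; first lra.
  move=> N; have t0 : 0 <= Num.sqrt (Num.sqrt N%:R) :> R by apply: sqrtr_ge0.
  split.
  - move=> h [hr hm].
    have := @boundF R a N h a0 hr.
    have hm' : forall h', (1 <= h' <= N)%N -> Fc a N h <= Fc a N h'.
      move=> h' /hm; rewrite !HfunE ler_pM2l //.
    move=> /(_ hm') B; apply: (le_trans B); rewrite -/C1; nra.
  - move=> h [hr hm].
    rewrite -sqrtrV; last exact: ltW.
    have := @boundF R a^-1 N h ai0 hr.
    have hm' : forall h', (1 <= h' <= N)%N -> Fc a^-1 N h <= Fc a^-1 N h'.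
      move=> h' /hm; rewrite !LfunE // ler_pM2l //; rewrite -/a; lra.
    move=> /(_ hm') B; apply: (le_trans B); rewrite -/C2; nra.
move=> hirr N; split.
- move=> h1 h2 [r1 m1] [r2 m2].
  have E : Hfun beta N h1 = Hfun beta N h2.
    by apply/eqP; rewrite eq_le m1 // m2.
  move: E; rewrite /Hfun.
  set q1 := Num.ceil _; set q2 := Num.ceil _ => E.
  have [eq|ne] := eqVneq q1 q2.
    have : h1%:R = h2%:R :> R by move: E; rewrite eq; lra.
    by move=> /eqP; rewrite eqr_nat => /eqP.
  exfalso; apply: hirr.
  exists (1 - ((h1%:Q - h2%:Q) / (q2 - q1)%:~R)) => //.
  rewrite rmorphB rmorph1 fmorph_div /= rmorphB /= !ratr_nat ratr_int.
  have qn : (q2 - q1)%:~R != 0 :> R.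
    by rewrite intr_eq0 subr_eq0 eq_sym.
  rewrite intrB in qn *.
  apply/eqP; rewrite subr_eq addrC -subr_eq eq_sym; apply/eqP.
  apply: (mulIf qn); rewrite divfK //.
  lra.
- move=> h1 h2 [r1 m1] [r2 m2].
  have E : Lfun beta N h1 = Lfun beta N h2.
    by apply/eqP; rewrite eq_le m1 // m2.
  move: E; rewrite /Lfun.
  set q1 := Num.ceil _; set q2 := Num.ceil _ => E.
  have [eq|ne] := eqVneq h1 h2; first by [].
  exfalso; apply: hirr.
  exists (1 - ((q1 - q2)%:~R / (h2%:Q - h1%:Q))) => //.
  rewrite !rmorphB rmorph1 fmorph_div /= !rmorphB /= ?ratr_nat ?ratr_int.
  have qn : h2%:R - h1%:R != 0 :> R.
    by rewrite subr_eq0 eqr_nat eq_sym.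
  apply/eqP; rewrite subr_eq addrC -subr_eq eq_sym; apply/eqP.
  apply: (mulIf qn); rewrite divfK //.
  apply/eqP; rewrite -subr_eq0; apply/eqP.
  have -> : q1%:~R - q2%:~R - (1 - beta) * (h2%:R - h1%:R) =
     ((2 * q1%:~R + 2 * (1 - beta) * h1%:R) - (2 * q2%:~R + 2 * (1 - beta) * h2%:R)) / 2 :> R.
    by field.
  by rewrite E subrr mul0r.
Qed.
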